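(* Let $T$ be the tree with two vertices $v,w$ of degree $3$ and four leaves (edges $e_1,e_2$ join $v$ to leaves, $e_3=vw$, edges $e_4,e_5$ join $w$ to leaves), with bias $b$ on each of $e_1,e_2,e_4,e_5$ and bias $1-4b$ on $e_3$, where $b$ is the unique zero of $105b^3-90b^2+24b-2$ in $0<b<1/4$. Then \[E_T=\frac{4(1-3b)(5b^2-5b+1)}{(7b-2)^2},\] which lies in $(0.8797,0.8798)$. Hence $c^*=0.8798$ is $5$-admissible.
   Context: A biased tree $T$ on $k$ edges is a tree with edges $e_1,\dots,e_k$ in which every non-leaf vertex has degree $3$, together with nonnegative numbers (biases) $b_1,\dots,b_k$ with $b_1+\cdots+b_k=1$. Let $\mathcal P$ be the set of subgraphs of $T$ that are maximal (under inclusion) among subgraphs that are unions of vertex-disjoint paths, each path beginning and ending at leaf vertices of $T$. Define $f_T(x_1,\dots,x_k)=\max_{P\in\mathcal P}\sum_{i:e_i\in E(P)}b_ix_i$ and \[E_T=\int_0^\infty\!\!\cdots\int_0^\infty f_T(x_1,\dots,x_k)e^{-x_1-\cdots-x_k}\,dx_1\cdots dx_k.\] A positive constant $c^*$ is $k$-admissible if $E_T<c^*$ for some biased tree $T$ on $k$ edges. *)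

(* Defs.v *)
From Stdlib Require Import Reals List.
Import ListNotations.
Open Scope R_scope.

Definition improper_int0 (g : R -> R) (l : R) : Prop :=
  exists pr : forall M : R, 0 <= M -> Riemann_integrable g 0 M,
    forall eps : R, eps > 0 ->
      exists M0 : R, forall (M : R) (hM : 0 <= M),
        M0 <= M -> Rabs (RiemannInt (pr M hM) - l) < eps.

(** Iterated integrals over [0,oo)^n; the outermost variable is the first
    argument. *)
Definition int2 (F : R -> R -> R) (l : R) : Prop :=
  exists g : R -> R,
    (forall x, 0 <= x -> improper_int0 (F x) (g x)) /\ improper_int0 g l.
Definition int3 (F : R -> R -> R -> R) (l : R) : Prop :=
  exists g : R -> R,
    (forall x, 0 <= x -> int2 (F x) (g x)) /\ improper_int0 g l.
Definition int4 (F : R -> R -> R -> R -> R) (l : R) : Prop :=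
  exists g : R -> R,
    (forall x, 0 <= x -> int3 (F x) (g x)) /\ improper_int0 g l.
Definition int5 (F : R -> R -> R -> R -> R -> R) (l : R) : Prop :=
  exists g : R -> R,
    (forall x, 0 <= x -> int4 (F x) (g x)) /\ improper_int0 g l.

(** * The tree T of the statement
    Vertices: 0,1,2,3 are leaves, 4 = v, 5 = w.
    Edges (indexed 1..5): e1 = {0,4}, e2 = {1,4}, e3 = {4,5} = vw,
    e4 = {5,2}, e5 = {5,3}. *)

Definition is_vertex (u : nat) : Prop := (u < 6)%nat.
Definition is_leaf (u : nat) : Prop := (u < 4)%nat.
Definition is_edge_index (i : nat) : Prop := (1 <= i <= 5)%nat.

Definition edge_ends (i : nat) : nat * nat :=
  match i with
  | 1%nat => (0%nat, 4%nat)
  | 2%nat => (1%nat, 4%nat)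
  | 3%nat => (4%nat, 5%nat)
  | 4%nat => (5%nat, 2%nat)
  | 5%nat => (5%nat, 3%nat)
  | _ => (0%nat, 0%nat)
  end.

Definition joins (i u v : nat) : Prop :=
  is_edge_index i /\
  (edge_ends i = (u, v) \/ edge_ends i = (v, u)).

Definition consecutive (p : list nat) (u v : nat) : Prop :=
  exists l1 l2, p = l1 ++ u :: v :: l2.

Definition leaf_path (p : list nat) : Prop :=
  NoDup p /\ (2 <= length p)%nat /\
  Forall is_vertex p /\
  (forall u v, consecutive p u v -> exists i, joins i u v) /\
  is_leaf (hd 0%nat p) /\ is_leaf (last p 0%nat).

Definition path_uses (p : list nat) (i : nat) : Prop :=
  exists u v, joins i u v /\ consecutive p u v.

Definition path_union (V E : nat -> Prop) : Prop :=
  exists ps : list (list nat),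
    Forall leaf_path ps /\
    (forall j k : nat, (j < length ps)%nat -> (k < length ps)%nat -> j <> k ->
       forall u, In u (nth j ps []) -> ~ In u (nth k ps [])) /\
    (forall u, V u <-> exists p, In p ps /\ In u p) /\
    (forall i, E i <-> exists p, In p ps /\ path_uses p i).

Definition subset (A B : nat -> Prop) : Prop := forall a, A a -> B a.

Definition in_calP (V E : nat -> Prop) : Prop :=
  path_union V E /\
  forall V' E', path_union V' E' -> subset V V' -> subset E E' ->
    subset V' V /\ subset E' E.

Definition bias (b : R) (i : nat) : R :=
  match i with
  | 3%nat => 1 - 4 * b
  | _ => b
  end.

Definition weight (b : R) (E : nat -> Prop) (x : nat -> R) (w : R) : Prop :=
  exists c : nat -> R,
    (forall i, is_edge_index i ->
       (E i -> c i = bias b i * x i) /\ (~ E i -> c i = 0)) /\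
    w = c 1%nat + c 2%nat + c 3%nat + c 4%nat + c 5%nat.

Definition coords (x1 x2 x3 x4 x5 : R) (i : nat) : R :=
  match i with
  | 1%nat => x1 | 2%nat => x2 | 3%nat => x3 | 4%nat => x4 | 5%nat => x5
  | _ => 0
  end.

Definition is_fT (b : R) (f : R -> R -> R -> R -> R -> R) : Prop :=
  forall x1 x2 x3 x4 x5 : R,
    let x := coords x1 x2 x3 x4 x5 in
    (exists V E, in_calP V E /\ weight b E x (f x1 x2 x3 x4 x5)) /\
    (forall V E w, in_calP V E -> weight b E x w -> w <= f x1 x2 x3 x4 x5).

Definition E_T_is (b : R) (l : R) : Prop :=
  exists f, is_fT b f /\
    int5 (fun x1 x2 x3 x4 x5 =>
            f x1 x2 x3 x4 x5 * exp (- (x1 + x2 + x3 + x4 + x5))) l.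

Definition b_spec (b : R) : Prop :=
  0 < b < 1/4 /\ 105 * b ^ 3 - 90 * b ^ 2 + 24 * b - 2 = 0.

(* Main.v *)
Require Import Defs.
From Stdlib Require Import Reals Lra Lia Psatz List Classical.
Import ListNotations.
Open Scope R_scope.

Lemma root_loc b : 0 < b < 1/4 -> 105 * b ^ 3 - 90 * b ^ 2 + 24 * b - 2 = 0 -> 0.172 < b < 0.1722.
Proof.
  intros [H1 H2] H. split.
  - destruct (Rlt_or_le 0.172 b) as [h|h]; auto. exfalso.
    assert (0 <= (0.172 - b) * b) by (apply Rmult_le_pos; lra).
    assert (0 <= (0.172 - b) * b * b) by (apply Rmult_le_pos; [|lra]; apply Rmult_le_pos; lra).
    nra.
  - destruct (Rlt_or_le b 0.1722) as [h|h]; auto. exfalso.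
    assert (0 <= (b - 0.1722) * (1/4 - b)) by (apply Rmult_le_pos; lra).
    assert (0 <= (b - 0.1722) * (1/4-b) * b) by (apply Rmult_le_pos; [|lra]; apply Rmult_le_pos; lra).
    nra.
Qed.

Lemma v_bounds b : 0.172 < b < 0.1722 ->
  8797 / 10000 < 4 * (1 - 3 * b) * (5 * b ^ 2 - 5 * b + 1) / (7 * b - 2) ^ 2 < 8798 / 10000.
Proof.
  intros [h1 h2].
  assert (hp : 0 < (7*b-2)^2) by nra.
  assert (0 <= (b - 0.172) * (0.1722 - b)) by (apply Rmult_le_pos; lra).
  assert (0 <= (b - 0.172) * (0.1722-b) * b) by (apply Rmult_le_pos; [|lra]; apply Rmult_le_pos; lra).
  split.
  - apply Rmult_lt_reg_r with ((7*b-2)^2); auto. replace (4 * (1 - 3 * b) * (5 * b ^ 2 - 5 * b + 1) / (7 * b - 2) ^ 2 * (7 * b - 2) ^ 2) with (4 * (1 - 3 * b) * (5 * b ^ 2 - 5 * b + 1)) by (field; lra). nra.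
  - apply Rmult_lt_reg_r with ((7*b-2)^2); auto. replace (4 * (1 - 3 * b) * (5 * b ^ 2 - 5 * b + 1) / (7 * b - 2) ^ 2 * (7 * b - 2) ^ 2) with (4 * (1 - 3 * b) * (5 * b ^ 2 - 5 * b + 1)) by (field; lra). nra.
Qed.

Definition gen (A B C m : R) (t : R) : R := (A + B * t) * exp (- t) + C * exp (- (m * t)).

Lemma dexpl m t : derivable_pt_lim (fun t => exp (- (m * t))) t (- m * exp (- (m * t))).
Proof.
  assert (H := derivable_pt_lim_comp (fun t => - (m * t)) exp t (- m) (exp (- (m*t)))).
  replace (- m * exp (- (m * t))) with (exp (- (m * t)) * - m) by ring.
  apply H.
  - apply derivable_pt_lim_ext with (mult_real_fct (- m) id).
    { intro; unfold mult_real_fct, id; ring. }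
    replace (- m) with (- m * 1) at 2 by ring.
    apply derivable_pt_lim_scal. apply derivable_pt_lim_id.
  - apply derivable_pt_lim_exp.
Qed.

Lemma dpl_eq f x l l' : derivable_pt_lim f x l -> l = l' -> derivable_pt_lim f x l'.
Proof. intros; subst; auto. Qed.

Lemma gen_deriv A B C m t :
  derivable_pt_lim (gen A B C m) t (gen (B - A) (- B) (- (C * m)) m t).
Proof.
  unfold gen.
  apply derivable_pt_lim_ext with
    (plus_fct (mult_fct (fun t => A + B * t) (fun t => exp (- (1 * t)))) (mult_real_fct C (fun t => exp (- (m * t))))).
  { intro z. unfold plus_fct, mult_fct, mult_real_fct. rewrite Rmult_1_l. reflexivity. }
  eapply dpl_eq.
  - apply derivable_pt_lim_plus.
    + apply derivable_pt_lim_mult.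
      * apply derivable_pt_lim_ext with (plus_fct (fct_cte A) (mult_real_fct B id)).
        { intro; unfold plus_fct, fct_cte, mult_real_fct, id; ring. }
        apply derivable_pt_lim_plus. apply derivable_pt_lim_const.
        apply derivable_pt_lim_scal. apply derivable_pt_lim_id.
      * apply dexpl.
    + apply derivable_pt_lim_scal. apply dexpl.
  - rewrite !Rmult_1_l. ring.
Qed.

Lemma gen_cont A B C m t : continuity_pt (gen A B C m) t.
Proof.
  apply derivable_continuous_pt. exists (gen (B - A) (- B) (- (C * m)) m t).
  apply gen_deriv.
Qed.

Definition Gen A B C m := gen (- (A + B)) (- B) (- (C / m)) m.

Lemma Gen_deriv A B C m t : m <> 0 -> derivable_pt_lim (Gen A B C m) t (gen A B C m t).
Proof.
  intro hm. unfold Gen.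
  replace (gen A B C m t) with (gen (- B - - (A + B)) (- - B) (- (- (C / m) * m)) m t).
  apply gen_deriv.
  unfold gen. field. auto.
Qed.

Lemma FTC_gen (g G : R -> R) a b (pr : Riemann_integrable g a b) :
  a <= b -> (forall x, a <= x <= b -> continuity_pt g x) ->
  (forall x, a <= x <= b -> derivable_pt_lim G x (g x)) -> RiemannInt pr = G b - G a.
Proof.
  intros H H0 HG.
  rewrite (RiemannInt_P20 H (FTC_P1 H H0) pr).
  assert (H1 := RiemannInt_P29 H H0).
  assert (H2 : antiderivative g G a b).
  { split; auto. intros x hx. exists (exist _ (g x) (HG x hx)).
    symmetry. apply derive_pt_eq_0. apply HG; auto. }
  destruct (antiderivative_Ucte g _ _ _ _ H1 H2) as [c H3].
  rewrite !H3; [ring | lra | lra].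
Qed.

Lemma expm_le M : 0 < M -> exp (- M) <= 1 / M.
Proof.
  intro hM. rewrite exp_Ropp. assert (h := exp_ineq1_le M).
  unfold Rdiv. rewrite Rmult_1_l. apply Rinv_le_contravar; lra.
Qed.

Lemma Mexpm_le M : 0 < M -> M * exp (- M) <= 4 / M.
Proof.
  intro hM. rewrite exp_Ropp.
  assert (h := exp_ineq1_le (M/2)).
  assert (e : exp M = exp (M/2) * exp (M/2)) by (rewrite <- exp_plus; f_equal; field).
  assert (h2 : M * M / 4 <= exp M) by (rewrite e; nra).
  assert (hp : 0 < exp M) by apply exp_pos.
  apply Rmult_le_reg_r with (exp M); auto.
  rewrite Rmult_assoc, Rinv_l by lra.
  apply Rmult_le_reg_r with M; auto.
  replace (4 / M * exp M * M) with (4 * exp M) by (field; lra). nra.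
Qed.

Lemma expmm_le m M : 0 < m -> 0 < M -> exp (- (m * M)) <= 1 / m / M.
Proof.
  intros hm hM. eapply Rle_trans. apply expm_le. nra.
  right. field. lra.
Qed.

Lemma gen_bound A B C m M : 0 < m -> 0 < M ->
  Rabs (gen A B C m M) <= (Rabs A + 4 * Rabs B + Rabs C / m) / M.
Proof.
  intros hm hM. unfold gen.
  assert (e1 := expm_le M hM). assert (e2 := Mexpm_le M hM). assert (e3 := expmm_le m M hm hM).
  assert (p1 := exp_pos (- M)). assert (p2 := exp_pos (- (m*M))).
  eapply Rle_trans. apply Rabs_triang.
  rewrite !Rabs_mult, (Rabs_right (exp (- M))), (Rabs_right (exp (- (m*M)))) by lra.
  assert (Rabs (A + B * M) <= Rabs A + Rabs B * M).
  { eapply Rle_trans. apply Rabs_triang. rewrite Rabs_mult, (Rabs_right M) by lra. lra. }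
  assert (hA := Rabs_pos A). assert (hB := Rabs_pos B). assert (hC := Rabs_pos C).
  apply Rle_trans with ((Rabs A + Rabs B * M) * exp (- M) + Rabs C * exp (- (m * M))).
  { apply Rplus_le_compat_r. apply Rmult_le_compat_r; lra. }
  replace ((Rabs A + 4 * Rabs B + Rabs C / m) / M) with
     (Rabs A * (1 / M) + Rabs B * (4 / M) + Rabs C * (1 / m / M)) by (field; lra).
  replace ((Rabs A + Rabs B * M) * exp (- M)) with (Rabs A * exp (- M) + Rabs B * (M * exp (-M))) by ring.
  apply Rplus_le_compat; [apply Rplus_le_compat|]; apply Rmult_le_compat_l; lra.
Qed.

Lemma gen_lim A B C m : 0 < m ->
  forall eps, eps > 0 -> exists M0, forall M, M0 <= M -> Rabs (gen A B C m M) < eps.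
Proof.
  intros hm eps heps.
  set (K := Rabs A + 4 * Rabs B + Rabs C / m).
  assert (hK : 0 <= K).
  { unfold K. assert (Rabs C / m >= 0). { unfold Rdiv. apply Rle_ge, Rmult_le_pos. apply Rabs_pos. left; apply Rinv_0_lt_compat; auto. }
    assert (h1 := Rabs_pos A). assert (h2 := Rabs_pos B). lra. }
  exists (Rmax 1 (2 * K / eps)). intros M hM.
  assert (h1 := Rmax_l 1 (2 * K / eps)). assert (h2 := Rmax_r 1 (2 * K / eps)).
  assert (hM0 : 0 < M) by lra.
  eapply Rle_lt_trans. apply gen_bound; auto. fold K.
  apply Rmult_lt_reg_r with M; auto.
  replace (K / M * M) with K by (field; lra).
  assert (2 * K <= eps * M).
  { apply Rmult_le_reg_r with (/ eps). apply Rinv_0_lt_compat; lra.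
    replace (eps * M * / eps) with M by (field; lra). unfold Rdiv in h2. lra. }
  nra.
Qed.

Lemma RI_piece g A B C m u v : u <= v -> 0 < m ->
  (forall x, u <= x <= v -> g x = gen A B C m x) ->
  { pr : Riemann_integrable g u v | RiemannInt pr = Gen A B C m v - Gen A B C m u }.
Proof.
  intros huv hm H.
  assert (pr0 : Riemann_integrable (gen A B C m) u v).
  { apply continuity_implies_RiemannInt; auto. intros; apply gen_cont. }
  assert (pr : Riemann_integrable g u v).
  { apply Riemann_integrable_ext with (gen A B C m); auto.
    intros x hx. rewrite Rmin_left, Rmax_right in hx by auto. symmetry; auto. }
  exists pr.
  rewrite (RiemannInt_P18 pr pr0 huv).
  - apply FTC_gen; auto. intros; apply gen_cont. intros; apply Gen_deriv; lra.
  - intros x hx. apply H; lra.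
Qed.

Lemma improper_pw g p A1 B1 C1 m1 A2 B2 C2 m2 :
  0 <= p -> 0 < m1 -> 0 < m2 ->
  (forall x, 0 <= x <= p -> g x = gen A1 B1 C1 m1 x) ->
  (forall x, p <= x -> g x = gen A2 B2 C2 m2 x) ->
  improper_int0 g (Gen A1 B1 C1 m1 p - Gen A1 B1 C1 m1 0 - Gen A2 B2 C2 m2 p).
Proof.
  intros hp hm1 hm2 H1 H2.
  assert (pr : forall M, 0 <= M -> Riemann_integrable g 0 M).
  { intros M hM. destruct (Rle_dec M p) as [h|h].
    - destruct (RI_piece g A1 B1 C1 m1 0 M) as [pr _]; auto.
      intros; apply H1; lra.
    - apply RiemannInt_P24 with p.
      + destruct (RI_piece g A1 B1 C1 m1 0 p) as [pr _]; auto.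
      + destruct (RI_piece g A2 B2 C2 m2 p M) as [pr _]; auto. lra.
        intros; apply H2; lra. }
  exists pr. intros eps heps.
  destruct (gen_lim (- (A2 + B2)) (- B2) (- (C2 / m2)) m2 hm2 eps heps) as [M0 HM0].
  exists (Rmax p M0). intros M hM hMM.
  assert (a1 := Rmax_l p M0). assert (a2 := Rmax_r p M0).
  destruct (RI_piece g A1 B1 C1 m1 0 p) as [prA eA]; auto.
  destruct (RI_piece g A2 B2 C2 m2 p M) as [prB eB]; auto. lra.
  intros; apply H2; lra.
  rewrite <- (RiemannInt_P26 prA prB (pr M hM)), eA, eB.
  replace (Gen A1 B1 C1 m1 p - Gen A1 B1 C1 m1 0 + (Gen A2 B2 C2 m2 M - Gen A2 B2 C2 m2 p) -
    (Gen A1 B1 C1 m1 p - Gen A1 B1 C1 m1 0 - Gen A2 B2 C2 m2 p)) with (Gen A2 B2 C2 m2 M) by ring.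
  apply HM0. lra.
Qed.

Lemma improper_pw' g p A1 B1 C1 m1 A2 B2 C2 m2 l :
  0 <= p -> 0 < m1 -> 0 < m2 ->
  (forall x, 0 <= x <= p -> g x = gen A1 B1 C1 m1 x) ->
  (forall x, p <= x -> g x = gen A2 B2 C2 m2 x) ->
  l = (A1 + B1 + C1 / m1) - ((A1 + B1 + B1 * p) * exp (- p) + C1 / m1 * exp (- (m1 * p)))
      + ((A2 + B2 + B2 * p) * exp (- p) + C2 / m2 * exp (- (m2 * p))) ->
  improper_int0 g l.
Proof.
  intros. replace l with (Gen A1 B1 C1 m1 p - Gen A1 B1 C1 m1 0 - Gen A2 B2 C2 m2 p).
  apply improper_pw; auto.
  subst l. unfold Gen, gen. rewrite !Rmult_0_r, !Ropp_0, !exp_0. field. split; lra.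
Qed.

Lemma improper_sm g A B C m l : 0 < m ->
  (forall x, 0 <= x -> g x = gen A B C m x) -> l = A + B + C / m -> improper_int0 g l.
Proof.
  intros hm H hl. apply improper_pw' with 0 A B C m A B C m;
    [lra|lra|lra| intros; apply H; lra | intros; apply H; lra | ].
  rewrite hl. rewrite !Rmult_0_r, !Ropp_0, !exp_0. field. lra.
Qed.

Lemma exp_split u t : exp (- (u + t)) = exp (- u) * exp (- t).
Proof. rewrite <- exp_plus. f_equal. ring. Qed.

Lemma Rmax0_l w : w <= 0 -> Rmax 0 w = 0.
Proof. intro; apply Rmax_left; lra. Qed.
Lemma Rmax0_r w : 0 <= w -> Rmax 0 w = w.
Proof. intro; apply Rmax_right; lra. Qed.

Lemma le_div_mul b t D : 0 < b -> t <= D / b -> b * t <= D.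
Proof. intros hb h. apply Rmult_le_compat_l with (r := b) in h; [|lra].
  replace (b * (D / b)) with D in h by (field; lra). lra. Qed.
Lemma ge_div_mul b t D : 0 < b -> D / b <= t -> D <= b * t.
Proof. intros hb h. apply Rmult_le_compat_l with (r := b) in h; [|lra].
  replace (b * (D / b)) with D in h by (field; lra). lra. Qed.

Definition fT (b x1 x2 x3 x4 x5 : R) : R :=
  b * (x1 + x2) + b * (x4 + x5) + Rmax 0 ((1 - 4 * b) * x3 - b * Rmin x1 x2 - b * Rmin x4 x5).

Definition I5 b x1 x2 x3 x4 x5 := fT b x1 x2 x3 x4 x5 * exp (- (x1 + x2 + x3 + x4 + x5)).

Definition psi b D y := if Rle_dec D 0 then 0 else D - b + b * exp (- (Rmin y (D / b))).

Definition V4 b x1 x2 x3 x4 :=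
  exp (- (x1 + x2 + x3 + x4)) *
  (b * (x1 + x2) + b * x4 + b + psi b ((1 - 4 * b) * x3 - b * Rmin x1 x2) x4).

Lemma level5 b x1 x2 x3 x4 : 0 < b < 1/4 -> 0 <= x1 -> 0 <= x2 -> 0 <= x3 -> 0 <= x4 ->
  improper_int0 (I5 b x1 x2 x3 x4) (V4 b x1 x2 x3 x4).
Proof.
  intros hb h1 h2 h3 h4. unfold V4, I5, fT, psi.
  set (P := b * (x1 + x2)).
  set (D := (1 - 4 * b) * x3 - b * Rmin x1 x2).
  set (E := exp (- (x1 + x2 + x3 + x4))).
  assert (eE : forall t, exp (- (x1 + x2 + x3 + x4 + t)) = E * exp (- t)) by (intro; apply exp_split).
  destruct (Rle_dec D 0) as [hD|hD].
  - apply improper_sm with (E * (P + b * x4)) (E * b) 0 1; [lra| |].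
    + intros t ht. rewrite eE, Rmax0_l. unfold gen; ring.
      assert (0 <= Rmin x4 t) by (apply Rmin_glb; lra). nra.
    + field.
  - assert (hr : 0 < D / b) by (apply Rdiv_lt_0_compat; lra).
    destruct (Rle_dec x4 (D / b)) as [hy|hy].
    + rewrite Rmin_left by lra.
      apply improper_pw' with x4 (E * (P + b * x4 + D)) 0 0 1 (E * (P + D)) (E * b) 0 1; [lra|lra|lra| | | ].
      * intros t ht. rewrite eE, Rmin_right by lra. rewrite Rmax0_r. unfold gen; ring.
        assert (b * x4 <= D) by (apply le_div_mul; lra). nra.
      * intros t ht. rewrite eE, Rmin_left by lra. rewrite Rmax0_r. unfold gen; ring.
        assert (b * x4 <= D) by (apply le_div_mul; lra). nra.
      * rewrite Rmult_1_l. field.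
    + rewrite Rmin_right by lra.
      apply improper_pw' with (D / b) (E * (P + b * x4 + D)) 0 0 1 (E * (P + b * x4)) (E * b) 0 1; [lra|lra|lra| | | ].
      * intros t ht. rewrite eE, Rmin_right by lra. rewrite Rmax0_r. unfold gen; ring.
        assert (b * t <= D) by (apply le_div_mul; lra). nra.
      * intros t ht. rewrite eE, Rmax0_l. unfold gen; ring.
        assert (D <= b * Rmin x4 t). { apply Rmin_case; apply ge_div_mul; lra. } nra.
      * rewrite Rmult_1_l. field. lra.
Qed.

Lemma exp2 t : exp (- (2 * t)) = exp (- t) * exp (- t).
Proof. rewrite <- exp_plus. f_equal. ring. Qed.

Definition chi b D := if Rle_dec D 0 then 0 else D - b / 2 + b / 2 * exp (- (2 * (D / b))).

Definition V3 b x1 x2 x3 :=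
  exp (- (x1 + x2 + x3)) * (b * (x1 + x2) + 2 * b + chi b ((1 - 4 * b) * x3 - b * Rmin x1 x2)).

Lemma level4 b x1 x2 x3 : 0 < b < 1/4 -> 0 <= x1 -> 0 <= x2 -> 0 <= x3 ->
  improper_int0 (V4 b x1 x2 x3) (V3 b x1 x2 x3).
Proof.
  intros hb h1 h2 h3. unfold V4, V3, chi, psi.
  set (P := b * (x1 + x2)).
  set (D := (1 - 4 * b) * x3 - b * Rmin x1 x2).
  set (E := exp (- (x1 + x2 + x3))).
  assert (eE : forall t, exp (- (x1 + x2 + x3 + t)) = E * exp (- t)) by (intro; apply exp_split).
  destruct (Rle_dec D 0) as [hD|hD].
  - apply improper_sm with (E * (P + b)) (E * b) 0 1; [lra| |].
    + intros t ht. rewrite eE. unfold gen; ring.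
    + field.
  - assert (hr : 0 < D / b) by (apply Rdiv_lt_0_compat; lra).
    apply improper_pw' with (D / b) (E * (P + D)) (E * b) (E * b) 2
       (E * (P + D + b * exp (- (D / b)))) (E * b) 0 1; [lra|lra|lra| | | ].
    + intros t ht. rewrite eE, Rmin_left by lra. unfold gen. rewrite exp2. ring.
    + intros t ht. rewrite eE, Rmin_right by lra. unfold gen. ring.
    + rewrite exp2. field. lra.
Qed.

Definition Kc b := 2 * (1 - 4 * b) ^ 2 / (b + 2 * (1 - 4 * b)).

Definition V2 b x1 x2 :=
  exp (- (x1 + x2)) * (b * (x1 + x2) + 2 * b + Kc b * exp (- (b / (1 - 4 * b) * Rmin x1 x2))).

Lemma level3 b x1 x2 : 0 < b < 1/4 -> 0 <= x1 -> 0 <= x2 ->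
  improper_int0 (V3 b x1 x2) (V2 b x1 x2).
Proof.
  intros hb h1 h2. unfold V3, V2, chi, Kc.
  set (P := b * (x1 + x2)).
  set (c := 1 - 4 * b).
  assert (hc : 0 < c) by (unfold c; lra).
  set (m := Rmin x1 x2).
  assert (hm : 0 <= m) by (apply Rmin_glb; lra).
  set (E := exp (- (x1 + x2))).
  assert (eE : forall t, exp (- (x1 + x2 + t)) = E * exp (- t)) by (intro; apply exp_split).
  set (p := b * m / c).
  assert (hp : 0 <= p) by (unfold p; apply Rmult_le_pos; [nra| left; apply Rinv_0_lt_compat; lra]).
  set (m2 := 1 + 2 * c / b).
  assert (hm2 : 0 < m2) by (unfold m2; assert (0 < 2 * c / b) by (apply Rdiv_lt_0_compat; lra); lra).
  assert (key : forall s, exp (2 * m) * exp (- (m2 * s)) = exp (- s) * exp (- (2 * ((c * s - b * m) / b)))).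
  { intro s. rewrite <- !exp_plus. f_equal. unfold m2. field. lra. }
  apply improper_pw' with p (E * (P + 2 * b)) 0 0 1
     (E * (P + 2 * b - b * m - b / 2)) (E * c) (E * (b / 2) * exp (2 * m)) m2; [lra|lra|lra| | | ].
  - intros s hs. cbv beta. rewrite eE. destruct (Rle_dec (c * s - b * m) 0) as [h|h].
    + unfold gen; ring.
    + exfalso. assert (c * s <= c * p) by (apply Rmult_le_compat_l; lra).
      unfold p in H. replace (c * (b * m / c)) with (b * m) in H by (field; lra). lra.
  - intros s hs. cbv beta. rewrite eE.
    assert (hcs : b * m <= c * s).
    { assert (c * p <= c * s) by (apply Rmult_le_compat_l; lra).
      unfold p in H. replace (c * (b * m / c)) with (b * m) in H by (field; lra). lra. }
    unfold gen.
    replace (E * (b / 2) * exp (2 * m) * exp (- (m2 * s))) with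
      (E * (b / 2) * (exp (2 * m) * exp (- (m2 * s)))) by ring.
    rewrite key.
    destruct (Rle_dec (c * s - b * m) 0) as [h|h].
    + replace (c * s - b * m) with 0 by lra. replace (2 * (0 / b)) with 0 by (field; lra).
      rewrite Ropp_0, exp_0. replace (E * c * s) with (E * (b * m)) by (rewrite Rmult_assoc; f_equal; lra). field.
    + field.
  - assert (e1 : exp (- (b / c * m)) = exp (- p)) by (unfold p; f_equal; field; lra).
    assert (e2 : exp (2 * m) * exp (- (m2 * p)) = exp (- p)).
    { rewrite key. replace (c * p - b * m) with 0 by (unfold p; field; lra).
      replace (2 * (0 / b)) with 0 by (field; lra). rewrite Ropp_0, exp_0. ring. }
    rewrite e1.
    replace (E * (b / 2) * exp (2 * m) / m2 * exp (- (m2 * p))) with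
      (E * (b / 2) / m2 * (exp (2 * m) * exp (- (m2 * p)))) by (field; lra).
    rewrite e2.
    replace (E * c * p) with (E * (b * m)) by (unfold p; field; lra).
    unfold m2. field. split; lra.
Qed.

Definition V1 b x :=
  exp (- x) * (b * x + 3 * b + Kc b / (1 + b / (1 - 4 * b)) +
    Kc b * (b / (1 - 4 * b)) / (1 + b / (1 - 4 * b)) * exp (- ((1 + b / (1 - 4 * b)) * x))).

Lemma exp_mul_lin u v t : exp (- (u * t)) * exp (- (v * t)) = exp (- ((u + v) * t)).
Proof. rewrite <- exp_plus. f_equal. ring. Qed.

Lemma level2 b x : 0 < b < 1/4 -> 0 <= x -> improper_int0 (V2 b x) (V1 b x).
Proof.
  intros hb hx. unfold V2, V1.
  set (K := Kc b). set (c := 1 - 4 * b).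
  assert (hc : 0 < c) by (unfold c; lra).
  set (be := b / c).
  assert (hbe : 0 < be) by (unfold be; apply Rdiv_lt_0_compat; lra).
  set (E := exp (- x)).
  assert (eE : forall t, exp (- (x + t)) = E * exp (- t)) by (intro; apply exp_split).
  assert (e1 : forall t, exp (- t) * exp (- (be * t)) = exp (- ((1 + be) * t))).
  { intro t. rewrite <- exp_mul_lin. f_equal. f_equal. f_equal. ring. }
  apply improper_pw' with x (E * (b * x + 2 * b)) (E * b) (E * K) (1 + be)
    (E * (b * x + 2 * b + K * exp (- (be * x)))) (E * b) 0 1; [lra|lra|lra| | | ].
  - intros t ht. cbv beta. rewrite eE, Rmin_right by lra. unfold gen.
    rewrite <- e1. ring.
  - intros t ht. cbv beta. rewrite eE, Rmin_left by lra. unfold gen. ring.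
  - rewrite <- (e1 x). field. lra.
Qed.

Lemma level1 b : 0 < b < 1/4 ->
  improper_int0 (V1 b) (4 * b + 2 * Kc b / (2 + b / (1 - 4 * b))).
Proof.
  intros hb.
  set (K := Kc b). set (c := 1 - 4 * b).
  assert (hc : 0 < c) by (unfold c; lra).
  set (be := b / c).
  assert (hbe : 0 < be) by (unfold be; apply Rdiv_lt_0_compat; lra).
  apply improper_sm with (3 * b + K / (1 + be)) b (K * be / (1 + be)) (1 + (1 + be)); [lra| |].
  - intros t ht. unfold V1. fold c be K. unfold gen.
    rewrite <- (exp_mul_lin 1 (1 + be)), Rmult_1_l. field. lra.
  - field. lra.
Qed.

Lemma joins_iff i u v : joins i u v <-> (
  (i = 1 /\ ((u = 0 /\ v = 4) \/ (u = 4 /\ v = 0))) \/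
  (i = 2 /\ ((u = 1 /\ v = 4) \/ (u = 4 /\ v = 1))) \/
  (i = 3 /\ ((u = 4 /\ v = 5) \/ (u = 5 /\ v = 4))) \/
  (i = 4 /\ ((u = 5 /\ v = 2) \/ (u = 2 /\ v = 5))) \/
  (i = 5 /\ ((u = 5 /\ v = 3) \/ (u = 3 /\ v = 5))))%nat.
Proof.
  unfold joins, is_edge_index. split.
  - intros [hi he].
    assert (i = 1 \/ i = 2 \/ i = 3 \/ i = 4 \/ i = 5)%nat as Hi by lia.
    destruct Hi as [->|[->|[->|[->| ->]]]]; simpl in he;
      destruct he as [e|e]; injection e; intros; subst; tauto.
  - intros H. repeat destruct H as [H|H]; destruct H as [-> [[-> ->]|[-> ->]]];
      split; try lia; simpl; auto.
Qed.

Lemma consec_nil u v : ~ consecutive [] u v.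
Proof. intros [l1 [l2 e]]. destruct l1; discriminate. Qed.

Lemma consec_one x u v : ~ consecutive [x] u v.
Proof. intros [l1 [l2 e]]. destruct l1 as [|y l1]; [discriminate|].
  injection e; intros e2 _. destruct l1; discriminate. Qed.

Lemma consec_cons x y l u v : consecutive (x :: y :: l) u v <->
  (u = x /\ v = y) \/ consecutive (y :: l) u v.
Proof.
  split.
  - intros [l1 [l2 e]]. destruct l1 as [|z l1].
    + injection e; intros; subst; auto.
    + injection e; intros e2 _. right. exists l1, l2. auto.
  - intros [[-> ->]|[l1 [l2 e]]].
    + exists [], l. reflexivity.
    + exists (x :: l1), l2. rewrite e. reflexivity.
Qed.

Lemma consec_head x y l : consecutive (x :: y :: l) x y.
Proof. apply consec_cons; auto. Qed.

Lemma adj_cases u v : (exists i, joins i u v) ->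
  (u=0/\v=4 \/ u=4/\v=0 \/ u=1/\v=4 \/ u=4/\v=1 \/ u=4/\v=5 \/ u=5/\v=4 \/
   u=5/\v=2 \/ u=2/\v=5 \/ u=5/\v=3 \/ u=3/\v=5)%nat.
Proof. intros [i H]. apply joins_iff in H. lia. Qed.

Ltac nd := match goal with H : ~ _ |- _ => solve [exfalso; apply H; simpl; auto 10] end.

Lemma leaf_path_cases p : leaf_path p ->
  (p = [0;4;1] \/ p = [1;4;0] \/ p = [2;5;3] \/ p = [3;5;2] \/
   p = [0;4;5;2] \/ p = [0;4;5;3] \/ p = [1;4;5;2] \/ p = [1;4;5;3] \/
   p = [2;5;4;0] \/ p = [2;5;4;1] \/ p = [3;5;4;0] \/ p = [3;5;4;1])%nat.
Proof.
  intros [Hnd [Hlen [Hv [Hc [Hh Hl]]]]].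
  destruct p as [|x0 [|x1 r]]; simpl in Hlen; try lia.
  unfold is_leaf in Hh, Hl; simpl in Hh.
  assert (A01 := adj_cases x0 x1 (Hc _ _ (consec_head _ _ _))).
  apply NoDup_cons_iff in Hnd; destruct Hnd as [N0 Hnd].
  apply NoDup_cons_iff in Hnd; destruct Hnd as [N1 Hnd].
  destruct r as [|x2 r].
  - simpl in Hl. lia.
  - assert (A12 := adj_cases x1 x2 (Hc _ _ (proj2 (consec_cons _ _ _ _ _) (or_intror (consec_head _ _ _))))).
    apply NoDup_cons_iff in Hnd; destruct Hnd as [N2 Hnd].
    destruct r as [|x3 r].
    + simpl in Hl. simpl in N0, N1.
      decompose [or and] A01; decompose [or and] A12; subst; try lia; try nd; auto 20.
    + assert (A23 := adj_cases x2 x3 (Hc _ _ (proj2 (consec_cons _ _ _ _ _) (or_intror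
         (proj2 (consec_cons _ _ _ _ _) (or_intror (consec_head _ _ _))))))).
      destruct r as [|x4 r].
      * simpl in Hl. simpl in N0, N1, N2.
        decompose [or and] A01; decompose [or and] A12; subst; try lia; try nd;
        decompose [or and] A23; subst; try lia; try nd; auto 20.
      * assert (A34 := adj_cases x3 x4 (Hc _ _ (proj2 (consec_cons _ _ _ _ _) (or_intror
         (proj2 (consec_cons _ _ _ _ _) (or_intror
         (proj2 (consec_cons _ _ _ _ _) (or_intror (consec_head _ _ _))))))))).
        apply NoDup_cons_iff in Hnd; destruct Hnd as [N3 Hnd].
        simpl in N0, N1, N2, N3.
        decompose [or and] A01; decompose [or and] A12; subst; try lia; try nd;
        decompose [or and] A23; subst; try lia; try nd;
        decompose [or and] A34; subst; try lia; try nd.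
Qed.

Lemma pu_cons x y l i : path_uses (x :: y :: l) i <-> joins i x y \/ path_uses (y :: l) i.
Proof.
  unfold path_uses. split.
  - intros [u [v [hj hc]]]. apply consec_cons in hc as [[-> ->]|hc]; eauto.
  - intros [hj|[u [v [hj hc]]]].
    + exists x, y. split; auto. apply consec_head.
    + exists u, v. split; auto. apply consec_cons; auto.
Qed.

Lemma pu_one x i : ~ path_uses [x] i.
Proof. intros [u [v [_ hc]]]. apply (consec_one x u v hc). Qed.

Definition E0 (i : nat) : Prop := (i = 1 \/ i = 2 \/ i = 4 \/ i = 5)%nat.
Definition Eac (a c i : nat) : Prop := (i = a + 1 \/ i = 3 \/ i = c + 2)%nat.
Definition Vac (a c u : nat) : Prop := (u = a \/ u = 4 \/ u = 5 \/ u = c)%nat.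

Ltac pu_solve :=
  repeat rewrite pu_cons; rewrite !joins_iff;
  split; [ intros H; repeat destruct H as [H|H]; try (exfalso; apply (pu_one _ _ H)); lia
         | intro H; lia ].

Lemma long_facts p a c : (a < 2)%nat -> (2 <= c < 4)%nat ->
  (p = [a;4;5;c] \/ p = [c;5;4;a])%nat ->
  (forall u, In u p <-> Vac a c u) /\ (forall i, path_uses p i <-> Eac a c i).
Proof.
  intros ha hc hp. unfold Vac, Eac.
  split.
  - intro u. destruct hp as [->| ->]; simpl; lia.
  - intro i. destruct hp as [->| ->]; repeat rewrite pu_cons; rewrite !joins_iff.
    + split.
      * intros H. destruct H as [H|[H|[H|H]]]; try (exfalso; apply (pu_one _ _ H)); lia.
      * intro H. lia.
    + split.
      * intros H. destruct H as [H|[H|[H|H]]]; try (exfalso; apply (pu_one _ _ H)); lia.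
      * intro H. lia.
Qed.

Lemma leaf_45 p : leaf_path p -> In 4%nat p \/ In 5%nat p.
Proof.
  intro H. apply leaf_path_cases in H.
  repeat destruct H as [H|H]; subst; simpl; auto 10.
Qed.

Lemma short_no3 p : (p = [0;4;1] \/ p = [1;4;0] \/ p = [2;5;3] \/ p = [3;5;2])%nat ->
  ~ path_uses p 3%nat.
Proof.
  intros hp H. repeat destruct hp as [hp|hp]; subst; repeat rewrite pu_cons in H;
  rewrite !joins_iff in H; destruct H as [H|[H|H]]; try (apply (pu_one _ _ H)); lia.
Qed.

Lemma S_lemma V E : path_union V E ->
  (forall i, E i -> E0 i) \/
  exists a c, (a < 2)%nat /\ (2 <= c < 4)%nat /\
    (forall u, V u -> Vac a c u) /\ (forall i, E i -> Eac a c i).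
Proof.
  intros [ps [Hf [Hd [HV HE]]]].
  rewrite Forall_forall in Hf.
  destruct (classic (E 3%nat)) as [H3|H3].
  - right. apply HE in H3 as [p [Hp Hu]].
    assert (Hlp := Hf p Hp).
    assert (Hcases := leaf_path_cases p Hlp).
    assert (exists a c, (a < 2)%nat /\ (2 <= c < 4)%nat /\ (p = [a;4;5;c] \/ p = [c;5;4;a])%nat)
      as [a [c [ha [hc hpe]]]].
    { destruct Hcases as [h|[h|[h|[h|Hcases]]]];
        try (exfalso; apply (short_no3 p); [ solve [auto 10] | exact Hu ]).
      destruct Hcases as [h|[h|[h|[h|[h|[h|[h|h]]]]]]]; subst p.
      - exists 0%nat, 2%nat. split; [lia|split; [lia|auto]].
      - exists 0%nat, 3%nat. split; [lia|split; [lia|auto]].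
      - exists 1%nat, 2%nat. split; [lia|split; [lia|auto]].
      - exists 1%nat, 3%nat. split; [lia|split; [lia|auto]].
      - exists 0%nat, 2%nat. split; [lia|split; [lia|auto]].
      - exists 1%nat, 2%nat. split; [lia|split; [lia|auto]].
      - exists 0%nat, 3%nat. split; [lia|split; [lia|auto]].
      - exists 1%nat, 3%nat. split; [lia|split; [lia|auto]]. }
    destruct (long_facts p a c ha hc hpe) as [FV FE].
    assert (key : forall q, In q ps -> q = p).
    { intros q Hq.
      destruct (In_nth ps q [] Hq) as [k [hk ek]].
      destruct (In_nth ps p [] Hp) as [j [hj ej]].
      destruct (Nat.eq_dec k j) as [e|ne].
      - subst. reflexivity.
      - exfalso. destruct (leaf_45 q (Hf q Hq)) as [h|h].
        + apply (Hd k j hk hj ne 4%nat); [rewrite ek; auto | rewrite ej; apply FV; unfold Vac; lia].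
        + apply (Hd k j hk hj ne 5%nat); [rewrite ek; auto | rewrite ej; apply FV; unfold Vac; lia]. }
    exists a, c. split; [auto|split; [auto|split]].
    + intros u Hu'. apply HV in Hu' as [q [Hq Hin]]. rewrite (key q Hq) in Hin. apply FV; auto.
    + intros i Hi. apply HE in Hi as [q [Hq Hin]]. rewrite (key q Hq) in Hin. apply FE; auto.
  - left. intros i Ei. assert (Ei' := Ei). apply HE in Ei as [p [_ [u [v [Hj _]]]]].
    apply joins_iff in Hj. unfold E0.
    destruct (Nat.eq_dec i 3) as [e|ne]; [subst; contradiction | lia].
Qed.

Definition V_of (ps : list (list nat)) (u : nat) : Prop := exists p, In p ps /\ In u p.
Definition E_of (ps : list (list nat)) (i : nat) : Prop := exists p, In p ps /\ path_uses p i.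

Lemma pu_of ps : Forall leaf_path ps ->
  (forall j k : nat, (j < length ps)%nat -> (k < length ps)%nat -> j <> k ->
       forall u, In u (nth j ps []) -> ~ In u (nth k ps [])) ->
  path_union (V_of ps) (E_of ps).
Proof. intros. exists ps. repeat split; auto; intros; auto. Qed.

Lemma consec_inv3 a b c u v : consecutive [a;b;c] u v -> (u = a /\ v = b) \/ (u = b /\ v = c).
Proof.
  intro H. apply consec_cons in H as [H|H]; auto. apply consec_cons in H as [H|H]; auto.
  exfalso; apply (consec_one _ _ _ H).
Qed.
Lemma consec_inv4 a b c d u v : consecutive [a;b;c;d] u v ->
  (u = a /\ v = b) \/ (u = b /\ v = c) \/ (u = c /\ v = d).
Proof.
  intro H. apply consec_cons in H as [H|H]; auto. apply consec_inv3 in H. tauto.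
Qed.

Lemma lp3 a b c : NoDup [a;b;c] -> (a < 4)%nat -> (b < 6)%nat -> (c < 4)%nat ->
  (exists i, joins i a b) -> (exists i, joins i b c) -> leaf_path [a;b;c].
Proof.
  intros. split; auto. split; [simpl; lia|]. split.
  { unfold is_vertex; repeat (constructor; [lia|]); constructor. }
  split; [|split; simpl; unfold is_leaf; lia].
  intros u v H5. apply consec_inv3 in H5 as [[-> ->]|[-> ->]]; auto.
Qed.
Lemma lp4 a b c d : NoDup [a;b;c;d] -> (a < 4)%nat -> (b < 6)%nat -> (c < 6)%nat -> (d < 4)%nat ->
  (exists i, joins i a b) -> (exists i, joins i b c) -> (exists i, joins i c d) -> leaf_path [a;b;c;d].
Proof.
  intros. split; auto. split; [simpl; lia|]. split.
  { unfold is_vertex; repeat (constructor; [lia|]); constructor. }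
  split; [|split; simpl; unfold is_leaf; lia].
  intros u v H7. apply consec_inv4 in H7 as [[-> ->]|[[-> ->]|[-> ->]]]; auto.
Qed.

Ltac jn := match goal with |- exists i, joins i ?u ?v =>
  first [ exists 1%nat; apply joins_iff; lia | exists 2%nat; apply joins_iff; lia
        | exists 3%nat; apply joins_iff; lia | exists 4%nat; apply joins_iff; lia
        | exists 5%nat; apply joins_iff; lia ] end.
Ltac ndup := repeat constructor; simpl; lia.

Definition ps0 : list (list nat) := [[0;4;1];[2;5;3]]%nat.
Definition psac (a c : nat) : list (list nat) := [[a;4;5;c]]%nat.

Lemma ps0_pu : path_union (V_of ps0) (E_of ps0).
Proof.
  apply pu_of.
  - constructor; [|constructor; [|constructor]].
    + apply lp3; try lia; try jn. ndup.
    + apply lp3; try lia; try jn. ndup.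
  - simpl. intros j k hj hk ne u h1 h2.
    destruct j as [|[|j]]; destruct k as [|[|k]]; try lia; simpl in *; lia.
Qed.

Lemma psac_pu a c : (a < 2)%nat -> (2 <= c < 4)%nat -> path_union (V_of (psac a c)) (E_of (psac a c)).
Proof.
  intros ha hc. apply pu_of.
  - constructor; [|constructor].
    apply lp4; try lia.
    + ndup.
    + assert (a = 0 \/ a = 1)%nat as [-> | ->] by lia; jn.
    + jn.
    + assert (c = 2 \/ c = 3)%nat as [-> | ->] by lia; jn.
  - simpl. intros j k hj hk ne. lia.
Qed.

Lemma V_ps0 u : V_of ps0 u <-> (u < 6)%nat.
Proof.
  unfold V_of, ps0. split.
  - intros [p [hp hu]]. simpl in hp. destruct hp as [<-|[<-|[]]]; simpl in hu; lia.
  - intro h. assert (u = 0 \/ u = 4 \/ u = 1 \/ u = 2 \/ u = 5 \/ u = 3)%nat as H by lia.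
    destruct H as [H|[H|[H|H]]].
    1-3: exists [0;4;1]%nat; simpl; split; auto; lia.
    destruct H as [H|[H|H]]; exists [2;5;3]%nat; simpl; split; auto; lia.
Qed.

Lemma E_ps0 i : E_of ps0 i <-> E0 i.
Proof.
  unfold E_of, ps0, E0. split.
  - intros [p [hp hu]]. simpl in hp. destruct hp as [<-|[<-|[]]];
      repeat rewrite pu_cons in hu; rewrite !joins_iff in hu;
      destruct hu as [H|[H|H]]; try (exfalso; apply (pu_one _ _ H)); lia.
  - intro h. destruct h as [->|[->|[->| ->]]].
    + exists [0;4;1]%nat. split; [simpl; auto|]. apply pu_cons; left; apply joins_iff; lia.
    + exists [0;4;1]%nat. split; [simpl; auto|]. apply pu_cons; right; apply pu_cons; left; apply joins_iff; lia.
    + exists [2;5;3]%nat. split; [simpl; auto|]. apply pu_cons; left; apply joins_iff; lia.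
    + exists [2;5;3]%nat. split; [simpl; auto|]. apply pu_cons; right; apply pu_cons; left; apply joins_iff; lia.
Qed.

Lemma psac_facts a c : (a < 2)%nat -> (2 <= c < 4)%nat ->
  (forall u, V_of (psac a c) u <-> Vac a c u) /\ (forall i, E_of (psac a c) i <-> Eac a c i).
Proof.
  intros ha hc. destruct (long_facts [a;4;5;c]%nat a c ha hc (or_introl eq_refl)) as [FV FE].
  unfold V_of, E_of, psac. split.
  - intro u. rewrite <- FV. split.
    + intros [p [[<-|[]] h]]; auto.
    + intro h. exists [a;4;5;c]%nat. simpl; auto.
  - intro i. rewrite <- FE. split.
    + intros [p [[<-|[]] h]]; auto.
    + intro h. exists [a;4;5;c]%nat. simpl; auto.
Qed.

Lemma pu_vertex V E u : path_union V E -> V u -> (u < 6)%nat.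
Proof.
  intros [ps [Hf [_ [HV _]]]] h. apply HV in h as [p [hp hu]].
  rewrite Forall_forall in Hf. destruct (Hf p hp) as [_ [_ [Hv _]]].
  rewrite Forall_forall in Hv. apply Hv; auto.
Qed.

Lemma ps0_calP : in_calP (V_of ps0) (E_of ps0).
Proof.
  split; [apply ps0_pu|].
  intros V' E' Hpu HV HE. split.
  - intros u hu. apply V_ps0. apply (pu_vertex V' E'); auto.
  - intros i hi. apply E_ps0.
    destruct (S_lemma V' E' Hpu) as [H|[a [c [ha [hc [_ H]]]]]]; auto.
    exfalso.
    assert (h1 := H 1%nat (HE 1%nat (proj2 (E_ps0 1%nat) (or_introl eq_refl)))).
    assert (h2 := H 2%nat (HE 2%nat (proj2 (E_ps0 2%nat) (or_intror (or_introl eq_refl))))).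
    unfold Eac in h1, h2. lia.
Qed.

Lemma psac_calP a c : (a < 2)%nat -> (2 <= c < 4)%nat -> in_calP (V_of (psac a c)) (E_of (psac a c)).
Proof.
  intros ha hc. destruct (psac_facts a c ha hc) as [FV FE].
  split; [apply psac_pu; auto|].
  intros V' E' Hpu HV HE.
  assert (H3 : E' 3%nat) by (apply HE, FE; unfold Eac; lia).
  destruct (S_lemma V' E' Hpu) as [H|[a' [c' [ha' [hc' [HV' HE']]]]]].
  - exfalso. apply H in H3. unfold E0 in H3. lia.
  - assert (ea := HE' _ (HE _ (proj2 (FE (a + 1)%nat) (or_introl eq_refl)))).
    assert (ec := HE' _ (HE _ (proj2 (FE (c + 2)%nat) (or_intror (or_intror eq_refl))))).
    unfold Eac in ea, ec.
    assert (a' = a) by lia. assert (c' = c) by lia. subst a' c'.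
    split.
    + intros u hu. apply FV. auto.
    + intros i hi. apply FE. auto.
Qed.

Lemma classify V E : in_calP V E ->
  (forall i, E i <-> E0 i) \/
  exists a c, (a < 2)%nat /\ (2 <= c < 4)%nat /\ (forall i, E i <-> Eac a c i).
Proof.
  intros [Hpu Hmax].
  destruct (S_lemma V E Hpu) as [H|[a [c [ha [hc [HV HE]]]]]].
  - left. intro i. split; auto.
    intro h. destruct (Hmax (V_of ps0) (E_of ps0) ps0_pu) as [_ H2].
    + intros u hu. apply V_ps0. apply (pu_vertex V E); auto.
    + intros j hj. apply E_ps0; auto.
    + apply H2. apply E_ps0; auto.
  - right. exists a, c. split; auto. split; auto.
    destruct (psac_facts a c ha hc) as [FV FE].
    intro i. split; auto.
    intro h. destruct (Hmax _ _ (psac_pu a c ha hc)) as [_ H2].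
    + intros u hu. apply FV; auto.
    + intros j hj. apply FE; auto.
    + apply H2. apply FE; auto.
Qed.

Lemma weight_iff b E F x w : (forall i, E i <-> F i) -> weight b E x w -> weight b F x w.
Proof.
  intros H [cc [Hc Hw]]. exists cc. split; auto.
  intros i hi. destruct (Hc i hi) as [h1 h2]. split.
  - intro; apply h1, H; auto.
  - intro hn; apply h2; rewrite H; auto.
Qed.

Lemma weight_E0_val b E x w : (forall i, E i <-> E0 i) -> weight b E x w ->
  w = b * x 1%nat + b * x 2%nat + b * x 4%nat + b * x 5%nat.
Proof.
  intros H [cc [Hc Hw]]. subst w.
  assert (e : forall i, E i -> (1 <= i <= 5)%nat -> cc i = bias b i * x i) by (intros i hi hi'; apply (Hc i hi'); auto).
  assert (n : forall i, ~ E i -> (1 <= i <= 5)%nat -> cc i = 0) by (intros i hi hi'; apply (Hc i hi'); auto).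
  rewrite (e 1%nat), (e 2%nat), (n 3%nat), (e 4%nat), (e 5%nat); try lia;
    try (apply H; unfold E0; lia).
  - simpl. ring.
  - rewrite H. unfold E0. lia.
Qed.

Lemma weight_Eac_val b E x w a c : (a < 2)%nat -> (2 <= c < 4)%nat ->
  (forall i, E i <-> Eac a c i) -> weight b E x w ->
  w = b * x (a + 1)%nat + (1 - 4 * b) * x 3%nat + b * x (c + 2)%nat.
Proof.
  intros ha hc H [cc [Hc Hw]]. subst w.
  assert (e : forall i, E i -> (1 <= i <= 5)%nat -> cc i = bias b i * x i) by (intros i hi hi'; apply (Hc i hi'); auto).
  assert (n : forall i, ~ E i -> (1 <= i <= 5)%nat -> cc i = 0) by (intros i hi hi'; apply (Hc i hi'); auto).
  assert (a = 0 \/ a = 1)%nat as [-> | ->] by lia; assert (c = 2 \/ c = 3)%nat as [-> | ->] by lia;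
  simpl.
  - rewrite (e 1%nat), (n 2%nat), (e 3%nat), (e 4%nat), (n 5%nat); try lia;
      try (apply H; unfold Eac; lia); try (rewrite H; unfold Eac; lia). simpl; ring.
  - rewrite (e 1%nat), (n 2%nat), (e 3%nat), (n 4%nat), (e 5%nat); try lia;
      try (apply H; unfold Eac; lia); try (rewrite H; unfold Eac; lia). simpl; ring.
  - rewrite (n 1%nat), (e 2%nat), (e 3%nat), (e 4%nat), (n 5%nat); try lia;
      try (apply H; unfold Eac; lia); try (rewrite H; unfold Eac; lia). simpl; ring.
  - rewrite (n 1%nat), (e 2%nat), (e 3%nat), (n 4%nat), (e 5%nat); try lia;
      try (apply H; unfold Eac; lia); try (rewrite H; unfold Eac; lia). simpl; ring.
Qed.

Lemma weight_E0_ex b x : weight b E0 x (b * x 1%nat + b * x 2%nat + b * x 4%nat + b * x 5%nat).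
Proof.
  exists (fun i => if (i =? 3)%nat then 0 else bias b i * x i). split.
  - intros i hi. unfold is_edge_index in hi. unfold E0.
    assert (i = 1 \/ i = 2 \/ i = 3 \/ i = 4 \/ i = 5)%nat as Hi by lia.
    destruct Hi as [->|[->|[->|[->| ->]]]]; simpl; split; intros; try reflexivity; lia.
  - simpl. ring.
Qed.

Lemma weight_Eac_ex b x a c : (a < 2)%nat -> (2 <= c < 4)%nat ->
  weight b (Eac a c) x (b * x (a + 1)%nat + (1 - 4 * b) * x 3%nat + b * x (c + 2)%nat).
Proof.
  intros ha hc.
  exists (fun i => if orb (orb (Nat.eqb i (a + 1)) (Nat.eqb i 3)) (Nat.eqb i (c + 2)) then bias b i * x i else 0). split.
  - intros i hi. unfold is_edge_index in hi. unfold Eac.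
    assert (a = 0 \/ a = 1)%nat as [-> | ->] by lia; assert (c = 2 \/ c = 3)%nat as [-> | ->] by lia;
    assert (i = 1 \/ i = 2 \/ i = 3 \/ i = 4 \/ i = 5)%nat as Hi by lia;
    destruct Hi as [->|[->|[->|[->| ->]]]]; simpl; split; intros; try reflexivity; lia.
  - assert (a = 0 \/ a = 1)%nat as [-> | ->] by lia; assert (c = 2 \/ c = 3)%nat as [-> | ->] by lia;
    simpl; ring.
Qed.
Lemma ex_root : exists b, 0 < b < 1/4 /\ 105 * b ^ 3 - 90 * b ^ 2 + 24 * b - 2 = 0.
Proof.
  assert (hc : continuity (fun b => 105 * b ^ 3 - 90 * b ^ 2 + 24 * b - 2)) by reg.
  destruct (IVT _ 0.15 0.2 hc ltac:(lra) ltac:(simpl; lra) ltac:(simpl; lra)) as [z [hz ez]].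
  exists z. split; [lra|exact ez].
Qed.

Lemma minb1 b x1 x2 : 0 <= b -> b * x1 + b * Rmin x1 x2 <= b * (x1 + x2).
Proof. intro hb. assert (h := Rmin_r x1 x2). assert (b * Rmin x1 x2 <= b * x2) by (apply Rmult_le_compat_l; auto). lra. Qed.
Lemma minb2 b x1 x2 : 0 <= b -> b * x2 + b * Rmin x1 x2 <= b * (x1 + x2).
Proof. intro hb. assert (h := Rmin_l x1 x2). assert (b * Rmin x1 x2 <= b * x1) by (apply Rmult_le_compat_l; auto). lra. Qed.

Lemma fT_is b : 0 < b < 1/4 -> is_fT b (fT b).
Proof.
  intros hb x1 x2 x3 x4 x5. cbv zeta.
  set (x := coords x1 x2 x3 x4 x5).
  assert (ex : x 1%nat = x1 /\ x 2%nat = x2 /\ x 3%nat = x3 /\ x 4%nat = x4 /\ x 5%nat = x5) by (repeat split).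
  destruct ex as [ex1 [ex2 [ex3 [ex4 ex5]]]].
  set (D := (1 - 4 * b) * x3 - b * Rmin x1 x2 - b * Rmin x4 x5).
  assert (eF : fT b x1 x2 x3 x4 x5 = b * (x1 + x2) + b * (x4 + x5) + Rmax 0 D) by reflexivity.
  split.
  - destruct (Rle_dec D 0) as [hD|hD].
    + exists (V_of ps0), (E_of ps0). split; [apply ps0_calP|].
      apply weight_iff with E0; [intro; symmetry; apply E_ps0|].
      rewrite eF, Rmax0_l by auto.
      replace (b * (x1 + x2) + b * (x4 + x5) + 0) with (b * x 1%nat + b * x 2%nat + b * x 4%nat + b * x 5%nat)
        by (rewrite ex1, ex2, ex4, ex5; ring).
      apply weight_E0_ex.
    + rewrite eF, Rmax0_r by lra. unfold D.
      destruct (Rle_dec x2 x1) as [h12|h12]; destruct (Rle_dec x5 x4) as [h45|h45].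
      * destruct (psac_facts 0 2 ltac:(lia) ltac:(lia)) as [_ FE].
        exists (V_of (psac 0 2)), (E_of (psac 0 2)). split; [apply psac_calP; lia|].
        apply weight_iff with (Eac 0 2); [intro; symmetry; apply FE|].
        rewrite (Rmin_right x1 x2), (Rmin_right x4 x5) by lra.
        replace (b * (x1 + x2) + b * (x4 + x5) + ((1 - 4 * b) * x3 - b * x2 - b * x5)) with
          (b * x (0 + 1)%nat + (1 - 4 * b) * x 3%nat + b * x (2 + 2)%nat) by (simpl; ring).
        apply weight_Eac_ex; lia.
      * destruct (psac_facts 0 3 ltac:(lia) ltac:(lia)) as [_ FE].
        exists (V_of (psac 0 3)), (E_of (psac 0 3)). split; [apply psac_calP; lia|].
        apply weight_iff with (Eac 0 3); [intro; symmetry; apply FE|].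
        rewrite (Rmin_right x1 x2), (Rmin_left x4 x5) by lra.
        replace (b * (x1 + x2) + b * (x4 + x5) + ((1 - 4 * b) * x3 - b * x2 - b * x4)) with
          (b * x (0 + 1)%nat + (1 - 4 * b) * x 3%nat + b * x (3 + 2)%nat) by (simpl; ring).
        apply weight_Eac_ex; lia.
      * destruct (psac_facts 1 2 ltac:(lia) ltac:(lia)) as [_ FE].
        exists (V_of (psac 1 2)), (E_of (psac 1 2)). split; [apply psac_calP; lia|].
        apply weight_iff with (Eac 1 2); [intro; symmetry; apply FE|].
        rewrite (Rmin_left x1 x2), (Rmin_right x4 x5) by lra.
        replace (b * (x1 + x2) + b * (x4 + x5) + ((1 - 4 * b) * x3 - b * x1 - b * x5)) with
          (b * x (1 + 1)%nat + (1 - 4 * b) * x 3%nat + b * x (2 + 2)%nat) by (simpl; ring).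
        apply weight_Eac_ex; lia.
      * destruct (psac_facts 1 3 ltac:(lia) ltac:(lia)) as [_ FE].
        exists (V_of (psac 1 3)), (E_of (psac 1 3)). split; [apply psac_calP; lia|].
        apply weight_iff with (Eac 1 3); [intro; symmetry; apply FE|].
        rewrite (Rmin_left x1 x2), (Rmin_left x4 x5) by lra.
        replace (b * (x1 + x2) + b * (x4 + x5) + ((1 - 4 * b) * x3 - b * x1 - b * x4)) with
          (b * x (1 + 1)%nat + (1 - 4 * b) * x 3%nat + b * x (3 + 2)%nat) by (simpl; ring).
        apply weight_Eac_ex; lia.
  - intros V E w HP Hw. rewrite eF.
    assert (hm0 := Rmax_l 0 D). assert (hmD := Rmax_r 0 D).
    destruct (classify V E HP) as [H|[a [c [ha [hc H]]]]].
    + rewrite (weight_E0_val b E x w H Hw), ex1, ex2, ex4, ex5. lra.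
    + rewrite (weight_Eac_val b E x w a c ha hc H Hw).
      assert (m1 := minb1 b x1 x2 ltac:(lra)). assert (m2 := minb2 b x1 x2 ltac:(lra)).
      assert (m4 := minb1 b x4 x5 ltac:(lra)). assert (m5 := minb2 b x4 x5 ltac:(lra)).
      assert (eD : D = (1 - 4 * b) * x3 - b * Rmin x1 x2 - b * Rmin x4 x5) by reflexivity.
      clearbody D.
      assert (a = 0 \/ a = 1)%nat as [-> | ->] by lia; assert (c = 2 \/ c = 3)%nat as [-> | ->] by lia;
      simpl; fold x; rewrite ?ex1, ?ex2, ?ex3, ?ex4, ?ex5; lra.
Qed.

Lemma uniq_root b1 b2 : b_spec b1 -> b_spec b2 -> b1 = b2.
Proof.
  intros [h1 e1] [h2 e2].
  destruct (root_loc b1 h1 e1) as [l1 u1]. destruct (root_loc b2 h2 e2) as [l2 u2].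
  assert (hQ : 0 < 105 * (b1 * b1 + b1 * b2 + b2 * b2) - 90 * (b1 + b2) + 24) by nra.
  assert (hz : (b1 - b2) * (105 * (b1 * b1 + b1 * b2 + b2 * b2) - 90 * (b1 + b2) + 24) = 0)
    by (simpl in e1, e2; nra).
  apply Rmult_integral in hz as [hz|hz]; lra.
Qed.

Lemma ET_val b : 0 < b < 1/4 ->
  E_T_is b (4 * (1 - 3 * b) * (5 * b ^ 2 - 5 * b + 1) / (7 * b - 2) ^ 2).
Proof.
  intros hb. exists (fT b). split; [apply fT_is; auto|].
  change (int5 (I5 b) (4 * (1 - 3 * b) * (5 * b ^ 2 - 5 * b + 1) / (7 * b - 2) ^ 2)).
  exists (V1 b). split.
  - intros x1 h1. exists (V2 b x1). split.
    + intros x2 h2. exists (V3 b x1 x2). split.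
      * intros x3 h3. exists (V4 b x1 x2 x3). split.
        -- intros x4 h4. apply level5; auto.
        -- apply level4; auto.
      * apply level3; auto.
    + apply level2; auto.
  - replace (4 * (1 - 3 * b) * (5 * b ^ 2 - 5 * b + 1) / (7 * b - 2) ^ 2)
      with (4 * b + 2 * Kc b / (2 + b / (1 - 4 * b))).
    + apply level1; auto.
    + unfold Kc. field. repeat split; lra.
Qed.

Theorem mainTheorem8 :
  (exists! b : R, b_spec b) /\
  forall b : R, b_spec b ->
    let v := 4 * (1 - 3 * b) * (5 * b ^ 2 - 5 * b + 1) / (7 * b - 2) ^ 2 in
    E_T_is b v /\ 8797 / 10000 < v < 8798 / 10000 /\
    (exists ET, E_T_is b ET /\ ET < 8798 / 10000).
Proof.
  split.
  - destruct ex_root as [b hb]. exists b. split; [exact hb|].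
    intros b' hb'. apply uniq_root; auto.
  - intros b [hb eb]. cbv zeta.
    assert (HE := ET_val b hb).
    assert (HB := v_bounds b (root_loc b hb eb)).
    split; [exact HE|split; [exact HB|]].
    eexists; split; [exact HE|apply HB].
Qed.
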